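(* Let $\mathcal{T}$ be a finite tree, $w:V(\mathcal{T})\to\mathbb{R}_{\ge0}$, $m=w(\mathcal{T})$, and let $C$ be a centroid tree of $(\mathcal{T},w)$ with $\mathtt{cost}_w(C)=\mathtt{cent}(\mathcal{T},w)$. Let $p\ge0$ and let $v_0,v_1,\dots,v_p$ be vertices such that $v_0$ is the root of $C$ and $v_i$ is a child of $v_{i-1}$ in $C$ for $1\le i\le p$; let $P=\{v_0,\dots,v_p\}$. Then $$\mathtt{cent}(\mathcal{T},w)\le\left(2-\frac1{2^p}\right)m+\sum_{\mathcal{H}\in\mathbb{C}(\mathcal{T}-P)}\mathtt{cent}(\mathcal{H},w).$$
   Context: $\mathbb{C}(G)$ denotes the set of connected components of a graph $G$, and $\mathcal{T}-P$ is the subgraph induced by $V(\mathcal{T})\setminus P$. For a subgraph $\mathcal{H}$, $w(\mathcal{H})=\sum_{x\in V(\mathcal{H})}w(x)$, and $w$ also denotes its restriction to $V(\mathcal{H})$. A search tree on a tree $\mathcal{T}$ is a rooted tree $T$ with vertex set $V(\mathcal{T})$ defined recursively: its root is an arbitrary vertex $r$, and the children of $r$ are the roots of search trees built on the connected components of $\mathcal{T}-r$; a single-vertex tree has only itself as search tree. $\mathtt{cost}_w(T)=\sum_x w(x)\,\mathtt{depth}_T(x)$ with root depth $1$. A vertex $v$ is a centroid of $(\mathcal{T},w)$ if each component $\mathcal{H}$ of $\mathcal{T}-v$ has $w(\mathcal{H})\le w(\mathcal{T})/2$. A search tree $T$ is a centroid tree if each vertex $x$ is a centroid of $(\mathcal{T}[V(T_x)],w)$,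 $T_x$ being the subtree of $T$ rooted at $x$. $\mathtt{cent}(\mathcal{T},w)$ is the maximum cost of a centroid tree of $(\mathcal{T},w)$. *)

(* Defs.v *)
From HB Require Import structures.
From mathcomp Require Import all_boot all_order all_algebra.
From mathcomp Require Import reals.
From Stdlib Require List.
Set Implicit Arguments. Unset Strict Implicit. Unset Printing Implicit Defensive.
Import Order.TTheory GRing.Theory Num.Theory.
Local Open Scope ring_scope.

Section Defs.
Variable V : finType.
Variable e : rel V.

Definition relS (S : {set V}) : rel V := fun x y => [&& x \in S, y \in S & e x y].

Definition comp (S : {set V}) (x : V) : {set V} := [set y in S | connect (relS S) x y].

Definition comps (S : {set V}) : {set {set V}} := [set comp S x | x in S].

Definition connectedS (S : {set V}) : Prop :=
  forall x y, x \in S -> y \in S -> connect (relS S) x y.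

Definition acyclic : Prop :=
  ~ exists (x : V) (p : seq V),
      [/\ path e x p, uniq (x :: p), 2 <= size p & e (last x p) x]%N.

Definition is_tree : Prop :=
  [/\ symmetric e, irreflexive e, connectedS [set: V] & acyclic].

Inductive stree : Type := Node : V -> seq stree -> stree.

Definition st_root (t : stree) : V := let: Node r _ := t in r.

Fixpoint vset (t : stree) : {set V} :=
  let: Node r ts := t in
  r |: (fix aux (l : seq stree) : {set V} :=
          if l is u :: us then vset u :|: aux us else set0) ts.

Fixpoint subtrees (t : stree) : seq stree :=
  let: Node r ts := t in
  t :: (fix aux (l : seq stree) : seq stree :=
          if l is u :: us then subtrees u ++ aux us else [::]) ts.

(* [is_st S t]: t is a search tree on the induced subgraph G[S] *)
Inductive is_st : {set V} -> stree -> Prop :=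
| ST (S : {set V}) (r : V) (ts : seq stree) :
    r \in S ->
    uniq (map vset ts) ->
    [set X in map vset ts] = comps (S :\ r) ->
    (forall u, List.In u ts -> is_st (vset u) u) ->
    is_st S (Node r ts).

Definition is_child (t : stree) (v u : V) : Prop :=
  exists ts, List.In (Node v ts) (subtrees t) /\
             exists c, List.In c ts /\ st_root c = u.

Variable R : realType.
Variable w : V -> R.

Definition wsum (S : {set V}) : R := \sum_(x in S) w x.

Definition centroid (S : {set V}) (v : V) : Prop :=
  v \in S /\ forall H, H \in comps (S :\ v) -> wsum H <= wsum S / 2.

(* sum of w(x) * depth(x), where the st_root of t has depth d *)
Fixpoint costd (d : nat) (t : stree) : R :=
  let: Node r ts := t in
  w r * d%:R + (fix aux (l : seq stree) : R :=
                  if l is u :: us then costd d.+1 u + aux us else 0) ts.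

Definition cost (t : stree) : R := costd 1 t.

Definition centroid_tree (S : {set V}) (t : stree) : Prop :=
  is_st S t /\ forall u, List.In u (subtrees t) -> centroid (vset u) (st_root u).

Definition cent (S : {set V}) : R :=
  sup (fun c : R => exists t, centroid_tree S t /\ c = cost t).

End Defs.

(* Main.v *)
Require Import Defs.
From HB Require Import structures.
From mathcomp Require Import all_boot all_order all_algebra.
From mathcomp Require Import reals.
From mathcomp Require classical_sets.
From mathcomp Require Import ring lra.
From Stdlib Require Classical.
Set Implicit Arguments. Unset Strict Implicit. Unset Printing Implicit Defensive.
Import Order.TTheory GRing.Theory Num.Theory.
Local Open Scope ring_scope.

Section Aux.
Variable V : finType.
Variable e : rel V.
Hypothesis esym : symmetric e.

Lemma vsetE (r : V) (ts : seq (stree V)) : vset (Node r ts) = r |: \bigcup_(u <- ts) vset u.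
Proof. rewrite /=; congr (_ |: _); elim: ts => [|u us IH] /=; rewrite ?big_nil ?big_cons ?IH //. Qed.

Lemma subtreesE (a : stree V) (r : V) (ts : seq (stree V)) : List.In a (subtrees (Node r ts)) <->
  a = Node r ts \/ exists u, List.In u ts /\ List.In a (subtrees u).
Proof.
rewrite /=; split.
- case=> [<-|]; first by left.
  move=> H; right; elim: ts H => [|u us IH] //= /List.in_app_iff [H|/IH [x [Hx Ha]]].
  + by exists u; split=> //; left.
  + by exists x; split=> //; right.
- case=> [->|[u [Hu Ha]]]; first by left.
  right; elim: ts Hu => [|x xs IH] //= [->|Hx]; apply/List.in_app_iff; by [left|right; apply: IH].
Qed.

Lemma is_stE S (r : V) (ts : seq (stree V)) : is_st e S (Node r ts) ->
  [/\ r \in S, uniq (map (@vset V) ts), [set X in map (@vset V) ts] = comps e (S :\ r)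
    & forall u, List.In u ts -> is_st e (vset u) u].
Proof. by move=> H; inversion H. Qed.

Lemma in_bigcup (u : stree V) (ts : seq (stree V)) : List.In u ts -> vset u \subset \bigcup_(x <- ts) vset x.
Proof.
elim: ts => [|x xs IH] //= H; rewrite big_cons; case: H => [->|H].
  by apply/subsetP=> y; rewrite inE => ->.
by apply: subset_trans (IH H) _; apply/subsetP=> y; rewrite inE => ->; rewrite orbT.
Qed.


Definition closedIn (X H : {set V}) := forall x y, x \in H -> y \in X -> e x y -> y \in H.

Lemma stay (X K : {set V}) a b : closedIn X K -> a \in K -> connect (relS e X) a b -> connect (relS e K) a b.
Proof.
move=> cK aK /connectP [p pth ->]; elim: p a aK pth => [|y p IH] a aK /=; first by rewrite connect0.
case/andP=> /and3P [aX yX ay] pth; have yK : y \in K by apply: cK ay.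
apply: connect_trans (connect1 _) (IH y yK pth); by rewrite /relS aK yK ay.
Qed.

Lemma connK (K : {set V}) a b : a \in K -> connect (relS e K) a b -> b \in K.
Proof.
move=> aK H; have cl : closed (relS e K) K by move=> x y /and3P [-> -> _].
by rewrite -(closed_connect cl H).
Qed.

Lemma relS_sym (X : {set V}) : symmetric (relS e X).
Proof. by move=> x y; rewrite /relS esym andbCA. Qed.

Lemma comp_closed (X : {set V}) x : closedIn X (Defs.comp e X x).
Proof.
move=> a b; rewrite !inE => /andP [aX xa] bX ab; rewrite bX /=.
by apply: connect_trans xa (connect1 _); rewrite /relS aX bX ab.
Qed.

Lemma comp_conn (X : {set V}) x : connectedS e (Defs.comp e X x).
Proof.
move=> a b aC bC; apply: (stay (comp_closed (x:=x)) aC).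
move: aC bC; rewrite !inE => /andP [_ xa] /andP [_ xb].
apply: connect_trans _ xb; by rewrite (sym_connect_sym (relS_sym X)).
Qed.

Lemma comp_eq (X H : {set V}) z : closedIn X H -> connectedS e H -> H \subset X -> z \in H -> H = Defs.comp e X z.
Proof.
move=> cH coH HX zH; apply/setP=> y; rewrite inE; apply/idP/idP.
- move=> yH; rewrite (subsetP HX y yH) /=.
  apply: connect_sub (coH z y zH yH) => a b /and3P [aH bH ab]; apply: connect1.
  by rewrite /relS (subsetP HX a aH) (subsetP HX b bH) ab.
- by case/andP=> _ /(stay cH zH); apply: connK.
Qed.

Lemma compsP (X H : {set V}) : H \in comps e X <->
  [/\ H != set0, H \subset X, connectedS e H & closedIn X H].
Proof.
split.
- case/imsetP=> x xX ->; split.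
  + by apply/set0Pn; exists x; rewrite inE xX connect0.
  + by apply/subsetP=> y; rewrite inE => /andP [].
  + exact: comp_conn.
  + exact: comp_closed.
- case=> /set0Pn [x xH] HX coH cH; apply/imsetP; exists x; first exact: (subsetP HX).
  exact: comp_eq.
Qed.

Lemma comps_disj (X H1 H2 : {set V}) z : H1 \in comps e X -> H2 \in comps e X -> z \in H1 -> z \in H2 -> H1 = H2.
Proof.
move=> /compsP [_ s1 c1 k1] /compsP [_ s2 c2 k2] z1 z2.
by rewrite (comp_eq k1 c1 s1 z1) (comp_eq k2 c2 s2 z2).
Qed.

Lemma comps_sub (X H : {set V}) : H \in comps e X -> H \subset X.
Proof. by case/compsP. Qed.

Lemma comps_triv (X : {set V}) : trivIset (comps e X).
Proof.
apply/trivIsetP=> A B AX BX AB; rewrite disjoints_subset; apply/subsetP=> z zA; rewrite inE; apply/negP=> zB.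
by apply: (negP AB); apply/eqP; apply: (comps_disj AX BX zA zB).
Qed.

Lemma cover_comps (X : {set V}) : cover (comps e X) = X.
Proof.
apply/setP=> x; apply/bigcupP/idP.
- by case=> H /comps_sub /subsetP; apply.
- move=> xX; exists (Defs.comp e X x); first by apply/imsetP; exists x.
  by rewrite inE xX connect0.
Qed.

Variable R : realType.
Variable w : V -> R.

Lemma costdE d (r : V) (ts : seq (stree V)) : costd w d (Node r ts) = w r * d%:R + \sum_(u <- ts) costd w d.+1 u.
Proof. rewrite /=; congr (_ + _); elim: ts => [|u us IH] /=; rewrite ?big_nil ?big_cons ?IH //. Qed.


Lemma wsum_comps (X : {set V}) : wsum w X = \sum_(H in comps e X) wsum w H.
Proof. by rewrite /wsum -{1}(cover_comps X) big_trivIset //; apply: comps_triv. Qed.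

End Aux.

Section Tree.
Variable V : finType.
Variable e : rel V.
Hypothesis esym : symmetric e.
Variable R : realType.
Variable w : V -> R.
Hypothesis w0 : forall x, 0 <= w x.

Lemma In_mem (T : eqType) (x : T) s : List.In x s -> x \in s.
Proof. elim: s => [|y s IH] //= [->|H]; rewrite inE ?eqxx //; by rewrite (IH H) orbT. Qed.

Lemma big_comps (A : Type) (idx : A) (op : Monoid.com_law idx) (F : {set V} -> A) S r ts :
  is_st e S (Node r ts) ->
  \big[op/idx]_(H in comps e (S :\ r)) F H = \big[op/idx]_(u <- ts) F (vset u).
Proof.
case/is_stE=> _ un eqs _; rewrite -eqs -(big_map (@vset V) xpredT F) (big_uniq _ un).
by apply: eq_bigl => X; rewrite inE.
Qed.

Lemma comps_child S r ts u : is_st e S (Node r ts) -> List.In u ts -> vset u \in comps e (S :\ r).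
Proof.
case/is_stE=> _ _ eqs _ Hu; rewrite -eqs inE; apply: In_mem; exact: List.in_map.
Qed.

Lemma vset_st S t : is_st e S t -> vset t = S.
Proof.
case: t => r ts H; rewrite vsetE.
rewrite (_ : \bigcup_(u <- ts) vset u = \bigcup_(H in comps e (S :\ r)) H); last first.
  by rewrite (big_comps _ (fun X : {set V} => X) H).
have := cover_comps esym (S :\ r); rewrite /cover => ->.
by apply: setD1K; case/is_stE: H.
Qed.

Lemma wsum_st S r ts : is_st e S (Node r ts) ->
  wsum w S = w r + \sum_(u <- ts) wsum w (vset u).
Proof.
move=> H; case/is_stE: (H) => rS _ _ _.
by rewrite /wsum (big_setD1 r rS) /= -/(wsum w _) (wsum_comps esym) (big_comps _ (wsum w) H).
Qed.

Lemma wsum_ge0 S : 0 <= wsum w S.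
Proof. by apply: sumr_ge0 => x _; apply: w0. Qed.

Lemma eq_big_In (f g : stree V -> R) l : (forall u, List.In u l -> f u = g u) ->
  \sum_(u <- l) f u = \sum_(u <- l) g u.
Proof.
elim: l => [|x l IH] H; rewrite ?big_nil ?big_cons //.
by rewrite H ?IH //; [move=> u Hu; apply: H; right|left].
Qed.

Lemma ler_big_In (f g : stree V -> R) l : (forall u, List.In u l -> f u <= g u) ->
  \sum_(u <- l) f u <= \sum_(u <- l) g u.
Proof.
elim: l => [|x l IH] H; rewrite ?big_nil ?big_cons //.
by apply: lerD; [apply: H; left | apply: IH => u Hu; apply: H; right].
Qed.

Lemma sum_ge0_In (f : stree V -> R) l : (forall u, List.In u l -> 0 <= f u) ->
  0 <= \sum_(u <- l) f u.
Proof.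
move=> H; have := ler_big_In (f := fun _ => 0) H; by rewrite big1_eq.
Qed.

Lemma costd_succ S t d : is_st e S t -> costd w d.+1 t = costd w d t + wsum w S.
Proof.
move=> H; elim: H d => {S t} S r ts rS un eqs sts IH d.
have HS := ST rS un eqs sts.
rewrite !costdE (wsum_st HS) (eq_big_In (g := fun u => costd w d.+1 u + wsum w (vset u))); last first.
  by move=> u Hu; apply: IH.
rewrite big_split /= -addn1 natrD; ring.
Qed.

Lemma cost_node S r ts : is_st e S (Node r ts) ->
  cost w (Node r ts) = wsum w S + \sum_(u <- ts) cost w u.
Proof.
move=> H; case/is_stE: (H) => _ _ _ sts.
rewrite /cost costdE (wsum_st H) (eq_big_In (g := fun u => cost w u + wsum w (vset u))); last first.
  by move=> u Hu; rewrite /cost (costd_succ 1 (sts u Hu)).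
rewrite big_split /= mulr1; ring.
Qed.

Lemma costd_ge0 S t d : is_st e S t -> 0 <= costd w d t.
Proof.
move=> H; elim: H d => {S t} S r ts rS un eqs sts IH d.
rewrite costdE; apply: addr_ge0; first by apply: mulr_ge0 => //; apply: ler0n.
by apply: sum_ge0_In => u Hu; apply: IH.
Qed.

Lemma costd_bound S t d : is_st e S t -> costd w d t <= (d + #|S|)%:R * wsum w S.
Proof.
move=> H; elim: H d => {S t} S r ts rS un eqs sts IH d.
have HS := ST rS un eqs sts.
rewrite costdE (wsum_st HS) mulrDr (mulrC (w r)); apply: lerD.
  by apply: ler_wpM2r => //; rewrite ler_nat leq_addr.
rewrite big_distrr /=; apply: ler_big_In => u Hu; apply: le_trans (IH u Hu d.+1) _.
apply: ler_wpM2r; first exact: wsum_ge0.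
rewrite ler_nat addSnnS leq_add2l.
have /(comps_sub esym) sub := comps_child HS Hu.
by rewrite (cardsD1 r S) rS add1n ltnS; apply: subset_leq_card.
Qed.


Lemma cent_ub S t : centroid_tree e w S t -> cost w t <= cent e w S.
Proof.
move=> ct; rewrite /cent; apply: sup_upper_bound; last by exists t.
split; first by exists (cost w t), t.
exists ((1 + #|S|)%:R * wsum w S) => c [t' [[Ht' _] ->]]; exact: costd_bound Ht'.
Qed.

Lemma cent_ge0 S : 0 <= cent e w S.
Proof.
case: (Classical_Prop.classic (exists t, centroid_tree e w S t)) => [[t ct]|nt].
- apply: le_trans (cent_ub ct); exact: costd_ge0 (proj1 ct).
- rewrite /cent sup_out //; case=> [[c [t [ct _]]] _]; apply: nt; by exists t.
Qed.

Lemma root_in (a : stree V) : st_root a \in vset a.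
Proof. by case: a => r ts; rewrite vsetE setU11. Qed.

Lemma vset_child (r : V) (ts : seq (stree V)) u : List.In u ts -> vset u \subset vset (Node r ts).
Proof.
move=> Hu; rewrite vsetE; apply: subset_trans (in_bigcup Hu) _.
by apply/subsetP=> y; rewrite inE => ->; rewrite orbT.
Qed.

Lemma vset_sub S t (a : stree V) : is_st e S t -> List.In a (subtrees t) -> vset a \subset vset t.
Proof.
move=> H; elim: H a => {S t} S r ts rS un eqs sts IH a /subtreesE [->|[u [Hu Ha]]].
  exact: subxx.
exact: subset_trans (IH u Hu a Ha) (vset_child _ Hu).
Qed.

Lemma uniq_In (l : seq (stree V)) u u' : uniq (map (@vset V) l) ->
  List.In u l -> List.In u' l -> vset u = vset u' -> u = u'.
Proof.
elim: l => [|x l IH] //= /andP [nx ul] [Hx|Hu] [Hx'|Hu'] E.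
- by rewrite -Hx -Hx'.
- by move: nx; rewrite Hx E (In_mem (List.in_map _ _ _ Hu')).
- by move: nx; rewrite Hx' -E (In_mem (List.in_map _ _ _ Hu)).
- exact: IH.
Qed.

Lemma childL S (r : V) (ts : seq (stree V)) c a : is_st e S (Node r ts) -> List.In c ts ->
  List.In a (subtrees (Node r ts)) -> st_root a \in vset c -> List.In a (subtrees c).
Proof.
move=> H Hc /subtreesE [->|[u [Hu Ha]]] /= ra.
- have := comps_sub esym (comps_child H Hc); move/subsetP/(_ _ ra); by rewrite !inE eqxx.
- case/is_stE: (H) => _ un _ sts.
  have rau : st_root a \in vset u := subsetP (vset_sub (sts u Hu) Ha) _ (root_in a).
  have E := comps_disj esym (comps_child H Hu) (comps_child H Hc) rau ra.
  by rewrite -(uniq_In un Hu Hc E).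
Qed.

Lemma topL S (r : V) (ts ts' : seq (stree V)) c : is_st e S (Node r ts) ->
  List.In (Node r ts') (subtrees (Node r ts)) -> List.In c ts' -> List.In c ts.
Proof.
move=> H /subtreesE [[<-]//|[u [Hu Ha]]] _.
case/is_stE: (H) => _ _ _ sts.
have := subsetP (vset_sub (sts u Hu) Ha) r (root_in _).
move/(subsetP (comps_sub esym (comps_child H Hu))); by rewrite !inE eqxx.
Qed.

Lemma In_self (c : stree V) : List.In c (subtrees c).
Proof. by case: c => r ts; apply/subtreesE; left. Qed.

End Tree.

Section Main.
Variable V : finType.
Variable e : rel V.
Hypothesis esym : symmetric e.
Variable R : realType.
Variable w : V -> R.
Hypothesis w0 : forall x, 0 <= w x.

Lemma memP (v : nat -> V) n x : x \in [set v (nat_of_ord i) | i : 'I_n.+1] <-> exists2 i, (i <= n)%N & x = v i.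
Proof.
split.
- by case/imsetP=> i _ ->; exists i => //; rewrite -ltnS ltn_ord.
- case=> i hi ->; apply/imsetP; exists (Ordinal (hi : (i < n.+1)%N)) => //.
Qed.

Lemma sum_sub (A B : {set {set V}}) (F : {set V} -> R) : (forall H, 0 <= F H) -> A \subset B ->
  \sum_(H in A) F H <= \sum_(H in B) F H.
Proof.
move=> F0 AB; rewrite [X in _ <= X](big_setID A) /= (setIidPr AB) lerDl.
by apply: sumr_ge0 => H _.
Qed.

Lemma sumU (A B : {set {set V}}) (F : {set V} -> R) : [disjoint A & B] ->
  \sum_(H in A :|: B) F H = \sum_(H in A) F H + \sum_(H in B) F H.
Proof.
move=> dAB; rewrite -bigU //; apply: eq_bigl => H; by rewrite !inE.
Qed.


Lemma main_lemma p : forall S t (v : nat -> V),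
  is_st e S t ->
  (forall a, List.In a (subtrees t) -> centroid e w (vset a) (st_root a)) ->
  v 0%N = st_root t ->
  (forall i, (1 <= i <= p)%N -> is_child t (v i.-1) (v i)) ->
  cost w t <= (2 - 1 / 2 ^+ p) * wsum w S
    + \sum_(H in comps e (S :\: [set v (nat_of_ord i) | i : 'I_p.+1])) cent e w H.
Proof.
elim: p => [|p IHp] S [r ts] v H cen v0 ch.
all: have Hc : forall u, List.In u ts -> cost w u <= cent e w (vset u).
all: try (move=> u Hu; apply: (cent_ub esym w0); split; [by case/is_stE: H => _ _ _; apply|];
  by move=> a Ha; apply: cen; apply/subtreesE; right; exists u).
all: rewrite (cost_node esym w H).
- have -> : [set v (nat_of_ord i) | i : 'I_1] = [set r].
    apply/setP=> x; rewrite [in RHS]inE; apply/idP/eqP => [/memP [i hi ->]|->].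
      by move: hi; rewrite leqn0 => /eqP ->.
    by apply/memP; exists 0%N.
  apply: lerD; first by rewrite expr0 divr1; lra.
  rewrite (big_comps _ (cent e w) H); exact: ler_big_In.
- have [ts' [Hn [c [Hc' rc]]]] := ch 1%N isT.
  rewrite /= v0 /= in Hn.
  have cts : List.In c ts := topL esym H Hn Hc'.
  have [_ _ _ sts] := is_stE H.
  have subc : forall a, List.In a (subtrees c) -> List.In a (subtrees (Node r ts)).
    by move=> a Ha; apply/subtreesE; right; exists c.
  have cA : forall i, (1 <= i <= p.+1)%N -> v i \in vset c.
    elim=> [|[|i] IHi] // hi.
      by rewrite -rc; apply: root_in.
    have vi : v i.+1 \in vset c by apply: IHi; apply: ltnW; case/andP: hi.
    have [ts'' [Hn'' [c'' [Hc'' rc'']]]] := ch i.+2 hi.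
    have Hin := childL esym H cts Hn'' vi.
    rewrite -rc''; apply: (subsetP (vset_sub (sts c cts) Hin)).
    exact: (subsetP (vset_child _ Hc'')) _ (root_in c'').
  have cB : forall i, (1 <= i <= p)%N -> is_child c ((fun j => v j.+1) i.-1) ((fun j => v j.+1) i).
    move=> i /andP [i1 ip]; rewrite /= prednK //.
    have [ts'' [Hn'' X]] := ch i.+1 ip.
    exists ts''; split => //; apply: (childL esym H cts Hn'').
    by apply: cA; rewrite i1 ltnW.
  have IH := IHp (vset c) c (fun j => v j.+1) (sts c cts) (fun a Ha => cen a (subc a Ha)) (Logic.eq_sym rc) cB.
  set P' := [set v i.+1 | i : 'I_p.+1] in IH *.
  set S' := vset c in IH cA *.
  have S'X : S' \in comps e (S :\ r) := comps_child H cts.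
  have P'S' : P' \subset S'.
    apply/subsetP=> x /(memP (fun j => v j.+1)) [i hi ->]; apply: cA; by rewrite /= ltnS.
  have Pmem : forall x, (x \in [set v i | i : 'I_p.+2]) = (x == r) || (x \in P').
    move=> x; apply/idP/orP => [/memP [[|i] hi ->] | [/eqP -> | /(memP (fun j => v j.+1)) [i hi ->]]].
    - by left; rewrite v0.
    - by right; apply/(memP (fun j => v j.+1)); exists i.
    - by apply/memP; exists 0%N => //; rewrite v0.
    - by apply/memP; exists i.+1.
  set Y := S :\: _.
  have Ymem : forall x, (x \in Y) = (x \notin P') && (x \in S :\ r).
    move=> x; rewrite /Y [LHS]in_setD Pmem negb_or in_setD1.
    by case: (x == r); case: (x \in P').
  have S'sub := comps_sub esym S'X.
  have [_ _ _ closS'] := (compsP esym _ _).1 S'X.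
  have AY : comps e (S' :\: P') \subset comps e Y.
    apply/subsetP=> K /(compsP esym) [ne KS conn clos]; apply/(compsP esym); split => //.
    - apply/subsetP=> x xK; have := subsetP KS x xK; rewrite Ymem in_setD => /andP [xP xS'].
      by rewrite xP (subsetP S'sub x xS').
    - move=> x y xK; rewrite Ymem => /andP [yP yX] exy.
      have := subsetP KS x xK; rewrite in_setD => /andP [_ xS'].
      apply: (clos _ _ xK _ exy); rewrite in_setD yP /=.
      exact: closS' xS' yX exy.
  have BY : (comps e (S :\ r) :\ S') \subset comps e Y.
    apply/subsetP=> K; rewrite in_setD1 => /andP [KS' KC].
    have [ne KX conn clos] := (compsP esym _ _).1 KC.
    apply/(compsP esym); split => //.
    - apply/subsetP=> x xK; rewrite Ymem (subsetP KX x xK) andbT; apply/negP => xP.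
      have xS' := subsetP P'S' x xP.
      by move/eqP: KS'; apply; apply: (comps_disj esym KC S'X xK xS').
    - move=> x y xK; rewrite Ymem => /andP [_ yX] exy; exact: clos xK yX exy.
  have dAB : [disjoint comps e (S' :\: P') & comps e (S :\ r) :\ S'].
    rewrite disjoints_subset; apply/subsetP=> K KA; rewrite inE in_setD1; apply/negP => /andP [KS' KC].
    have [/set0Pn [z zK] KS _ _] := (compsP esym _ _).1 KA.
    have zS' : z \in S' by move: (subsetP KS z zK); rewrite in_setD => /andP [].
    by move/eqP: KS'; apply; apply: (comps_disj esym KC S'X zK zS').
  have sumY : \sum_(K in comps e (S' :\: P')) cent e w K + \sum_(K in comps e (S :\ r) :\ S') cent e w K
      <= \sum_(K in comps e Y) cent e w K.
    rewrite -sumU //; apply: sum_sub => [K|]; first exact: (cent_ge0 esym w0 K).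
    by rewrite subUset AY BY.
  have T : \sum_(u <- ts) cent e w (vset u) = cent e w S' + \sum_(K in comps e (S :\ r) :\ S') cent e w K.
    by rewrite -(big_comps _ (cent e w) H) (big_setD1 _ S'X).
  have sum1 : \sum_(u <- ts) cost w u <= cost w c + \sum_(u <- ts) cent e w (vset u) - cent e w S'.
    have [l1 [l2 E]] := List.in_split c ts cts.
    have s1 : \sum_(u <- l1) cost w u <= \sum_(u <- l1) cent e w (vset u).
      by apply: ler_big_In => u Hu; apply: Hc; rewrite E; apply: List.in_or_app; left.
    have s2 : \sum_(u <- l2) cost w u <= \sum_(u <- l2) cent e w (vset u).
      by apply: ler_big_In => u Hu; apply: Hc; rewrite E; apply: List.in_or_app; right; right.
    rewrite E !big_cat !big_cons /=; rewrite /S'; lra.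
  have wc : wsum w S' <= wsum w S / 2.
    have [_ cr] := cen _ (In_self _); rewrite (vset_st esym H) in cr; exact: cr S'X.
  set q := (1 / 2 ^+ p : R).
  have q0 : 0 <= q by rewrite /q divr_ge0 // exprn_ge0.
  have q1 : q <= 1 by rewrite /q div1r invf_le1 ?exprn_gt0 // exprn_ege1 // ler1n.
  have eqq : 1 / 2 ^+ p.+1 = q / 2 :> R.
    rewrite /q exprS; field; by rewrite expf_neq0 // pnatr_eq0.
  have M : (2 - q) * wsum w S' <= (2 - q) * (wsum w S / 2).
    by apply: ler_wpM2l => //; lra.
  have eq2 : (2 - q / 2) * wsum w S = wsum w S + (2 - q) * (wsum w S / 2) by field.
  rewrite eqq eq2.
  move: M IH sum1 T sumY; set X1 := (2 - q) * wsum w S'; set X2 := (2 - q) * (wsum w S / 2).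
  move=> M IH sum1 T sumY; lra.
Qed.

End Main.

Theorem lemma5 (R : realType) (V : finType) (e : rel V) (w : V -> R)
  (C : stree V) (p : nat) (v : nat -> V) :
  is_tree e ->
  (forall x, 0 <= w x) ->
  centroid_tree e w [set: V] C ->
  cost w C = cent e w [set: V] ->
  v 0%N = st_root C ->
  (forall i, (1 <= i <= p)%N -> is_child C (v i.-1) (v i)) ->
  let P := [set v (nat_of_ord i) | i : 'I_p.+1] in
  cent e w [set: V] <=
    (2 - 1 / 2 ^+ p) * wsum w [set: V]
    + \sum_(H in comps e (~: P)) cent e w H.
Proof.
move=> [esym _ _ _] w0 [st cen] eqc v0 ch /=.
rewrite -eqc -setTD.
exact: (main_lemma esym w0 st cen v0 ch).
Qed.
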